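(* Let $C\subset\mathbb{R}^2$ be a nonempty compact set such that $U(x,y)\cap C\neq\emptyset$ for all $x,y\in C$ with $x\neq y$, where $U(x,y)=U(x,|x-y|)\cap U(y,|x-y|)$. Then $C$ is connected.
   Context: For $z\in\mathbb{R}^2$ and $r>0$, $U(z,r)$ denotes the open disc with centre $z$ and radius $r$. The set $U(x,y)$ is called the circle pair region of $x$ and $y$. *)

(* Defs.v *)
(* R^2 modelled as R * R (product topology = Euclidean topology). *)
From HB Require Import structures.
From mathcomp Require Import all_boot all_order all_algebra.
From mathcomp Require Import all_classical all_reals all_analysis.
Set Implicit Arguments. Unset Strict Implicit. Unset Printing Implicit Defensive.
Import Order.TTheory GRing.Theory Num.Theory.
Import numFieldNormedType.Exports.
Local Open Scope classical_set_scope.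
Local Open Scope ring_scope.

Definition edist {R : realType} (x y : R * R) : R :=
  Num.sqrt ((x.1 - y.1) ^+ 2 + (x.2 - y.2) ^+ 2).

Definition disc {R : realType} (z : R * R) (r : R) : set (R * R) :=
  [set p | edist z p < r].

Definition circle_pair {R : realType} (x y : R * R) : set (R * R) :=
  disc x (edist x y) `&` disc y (edist x y).

(* Main.v *)
Require Import Defs.
From HB Require Import structures.
From mathcomp Require Import all_boot all_order all_algebra.
From mathcomp Require Import all_classical all_reals all_analysis.
From mathcomp Require Import lra.
Import Order.TTheory GRing.Theory Num.Theory.
Import numFieldNormedType.Exports.
Local Open Scope classical_set_scope.
Local Open Scope ring_scope.

Definition sqd {R : realType} (x y : R * R) : R := (x.1 - y.1) * (x.1 - y.1) + (x.2 - y.2) * (x.2 - y.2).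

Lemma fst_cont (T U : topologicalType) : continuous (fun p : T * U => p.1).
Proof. move=> p; exact: cvg_fst. Qed.
Lemma snd_cont (T U : topologicalType) : continuous (fun p : T * U => p.2).
Proof. move=> p; exact: cvg_snd. Qed.

Lemma sqd_cont (R : realType) : continuous (fun p : (R * R) * (R * R) => sqd p.1 p.2).
Proof.
move=> p; rewrite /sqd.
have h1 : continuous (fun p : (R * R) * (R * R) => p.1.1).
  move=> q; apply: (continuous_comp (fst_cont _ _ q)); exact: fst_cont.
have h2 : continuous (fun p : (R * R) * (R * R) => p.1.2).
  move=> q; apply: (continuous_comp (fst_cont _ _ q)); exact: snd_cont.
have h3 : continuous (fun p : (R * R) * (R * R) => p.2.1).
  move=> q; apply: (continuous_comp (snd_cont _ _ q)); exact: fst_cont.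
have h4 : continuous (fun p : (R * R) * (R * R) => p.2.2).
  move=> q; apply: (continuous_comp (snd_cont _ _ q)); exact: snd_cont.
apply: cvgD; apply: cvgM; apply: cvgB; [exact: h1|exact: h3|exact: h1|exact: h3|exact: h2|exact: h4|exact: h2|exact: h4].
Qed.

Lemma haus (R : realType) : hausdorff_space (R * R)%type.
Proof. exact: norm_hausdorff. Qed.

Lemma sqd_pos (R : realType) (a b : R * R) : a <> b -> 0 < sqd a b.
Proof.
  rewrite /sqd; case: a b => a1 a2 [b1 b2] /= ab.
  have [h1|h1] := eqVneq a1 b1; have [h2|h2] := eqVneq a2 b2.
  - by exfalso; apply: ab; rewrite h1 h2.
  - have : 0 < (a2 - b2) * (a2 - b2) by rewrite -expr2 exprn_even_gt0 // subr_eq0.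
    by nra.
  - have : 0 < (a1 - b1) * (a1 - b1) by rewrite -expr2 exprn_even_gt0 // subr_eq0.
    by nra.
  - have : 0 < (a1 - b1) * (a1 - b1) by rewrite -expr2 exprn_even_gt0 // subr_eq0.
    by nra.
Qed.

Theorem mainTheorem1 (R : realType) (C : set (R * R)) :
  C !=set0 -> compact C ->
  (forall x y, C x -> C y -> x <> y -> circle_pair x y `&` C !=set0) ->
  connected C.
Proof.
move=> C0 cC H.
have clC : closed C by apply: compact_closed => //; exact: haus.
apply: contrapT => /connectedPn [E [E0 CE [s1 s2]]].
have sub : forall b, E b `<=` C by case => x Ex; rewrite CE; [right|left].
have clF : closure (E false) `<=` E false.
  move=> x cx.
  have : C x by rewrite (closure_id C).1 //; exact: (closure_subset (sub false)).
  rewrite CE => -[//|Tx].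
  by have : (closure (E false) `&` E true) x by []; rewrite s1.
have clT : closure (E true) `<=` E true.
  move=> x cx.
  have : C x by rewrite (closure_id C).1 //; exact: (closure_subset (sub true)).
  rewrite CE => -[Fx|//].
  by have : (E false `&` closure (E true)) x by []; rewrite s2.
have cE : forall b, compact (E b).
  move=> b; apply: (subclosed_compact _ cC (sub b)).
  apply/closure_id; apply/seteqP; split; first exact: subset_closure.
  by case: b.
have cP := compact_setX (cE false) (cE true).
have P0 : (E false `*` E true) !=set0.
  have [a Ea] := E0 false; have [b Eb] := E0 true; by exists (a, b).
have [[a b] abP mn] := compact_EVT_min P0 cP
  (continuous_subspaceT (@sqd_cont R)).
move: abP; rewrite inE => -[Ea Eb].
have ab : a <> b.
  move=> eab; have := separated_disjoint (conj s1 s2).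
  by move/seteqP => [/(_ a) + _]; apply; split => //; rewrite eab.
have [z [[za zb] Cz]] := H a b (sub _ _ Ea) (sub _ _ Eb) ab.
have sq : forall x y : R * R, (x.1 - y.1) ^+ 2 + (x.2 - y.2) ^+ 2 = sqd x y.
  by move=> x y; rewrite /sqd !expr2.
have sym : forall x y : R * R, sqd x y = sqd y x.
  by move=> x y; rewrite /sqd; lra.
have pos : 0 < sqd a b by apply: sqd_pos.
move: za zb; rewrite /Defs.disc /Defs.edist /= !sq !ltr_sqrt // => za zb.
move: Cz; rewrite CE => -[Fz|Tz].
- have := mn (z, b); rewrite !inE /= => /(_ (conj Fz Eb)); rewrite /= in za zb.
  by rewrite (sym z b); lra.
- have := mn (a, z); rewrite !inE /= => /(_ (conj Ea Tz)); rewrite /= in za zb.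
  lra.
Qed.
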